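(* Let $n,m$ be integers with $m\geq 1$ and $n\geq 6m+7$. Then $$ gr_{3}(K_{3} : S(n,m)) = \begin{cases} 5\cdot\frac{n}{2} +1 & \text{ if $n$ is even,}\\ 5\cdot\frac{n-1}{2} + 2 & \text{ if $n$ is odd.} \end{cases} $$
   Context: For integers $n\geq m\geq 0$, the double star $S(n,m)$ is the graph obtained from the disjoint union of the stars $K_{1,n}$ and $K_{1,m}$ by adding an edge between their centers. A $k$-coloring of a graph is an assignment of one of $k$ colors to each edge. A subgraph is rainbow if all its edges have distinct colors and monochromatic if all its edges have the same color. For graphs $G,H$ and a positive integer $k$, the Gallai–Ramsey number $gr_k(G:H)$ is the minimum integer $N$ such that every $k$-coloring of the edges of the complete graph $K_N$ contains either a rainbow copy of $G$ or a monochromatic copy of $H$. *)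

(* Defs.v *)
From mathcomp Require Import all_boot.
Set Implicit Arguments. Unset Strict Implicit. Unset Printing Implicit Defensive.

(* An edge k-coloring of the complete graph K_N on vertex set 'I_N is a
   symmetric function c : 'I_N -> 'I_N -> 'I_k; only values c x y with
   x != y are meaningful (the diagonal is ignored by all definitions below). *)
Definition edge_coloring (N k : nat) (c : 'I_N -> 'I_N -> 'I_k) : Prop :=
  forall x y, c x y = c y x.

Definition has_rainbow_K3 (N k : nat) (c : 'I_N -> 'I_N -> 'I_k) : Prop :=
  exists x y z : 'I_N,
    [/\ x != y, y != z, x != z &
        [/\ c x y != c y z, c x y != c x z & c y z != c x z]].

Definition has_mono_double_star (n m N k : nat) (c : 'I_N -> 'I_N -> 'I_k)
  : Prop :=
  exists (col : 'I_k) (u v : 'I_N) (A B : {set 'I_N}),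
    [/\ [/\ u != v, #|A| = n & #|B| = m],
        [/\ [disjoint A & B], u \notin A :|: B & v \notin A :|: B] &
        [/\ c u v = col,
            (forall a, a \in A -> c u a = col) &
            (forall b, b \in B -> c v b = col)]].

Definition gr_property (k n m N : nat) : Prop :=
  forall c : 'I_N -> 'I_N -> 'I_k, edge_coloring c ->
    has_rainbow_K3 c \/ has_mono_double_star n m c.

Definition is_gr_K3_double_star (k n m g : nat) : Prop :=
  gr_property k n m g /\ (forall N, gr_property k n m N -> g <= N).

(* Main.v *)
Require Import Defs.
From mathcomp Require Import all_boot.
From mathcomp Require Import zify.
From Stdlib Require Import Classical.
Set Implicit Arguments. Unset Strict Implicit. Unset Printing Implicit Defensive.

Lemma subset_of_card (T : finType) (X : {set T}) k :
  k <= #|X| -> exists2 Y : {set T}, Y \subset X & #|Y| = k.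
Proof.
elim: k => [|k IH] hk; first by exists set0; rewrite ?sub0set ?cards0.
have [Y sYX cY] := IH (ltnW hk).
have : 0 < #|X :\: Y|.
  rewrite cardsD (setIidPr sYX) cY; lia.
case/card_gt0P => x; rewrite inE => /andP[xY xX].
exists (x |: Y); first by rewrite subUset sub1set xX sYX.
by rewrite cardsU1 xY cY.
Qed.

Lemma cardsU_disj (T : finType) (A B : {set T}) :
  [disjoint A & B] -> #|A :|: B| = #|A| + #|B|.
Proof. by move=> d; rewrite cardsU (disjoint_setI0 d) cards0 subn0. Qed.

Lemma cardsD_ge (T : finType) (A B : {set T}) : #|A| - #|B| <= #|A :\: B|.
Proof. rewrite cardsD; have := subset_leq_card (subsetIr A B); lia. Qed.

Lemma col3 (a b g x : 'I_3) :
  a != b -> a != g -> b != g -> x != g -> (a == x) || (b == x).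
Proof.
by case: a => [[|[|[|?]]] ?] //; case: b => [[|[|[|?]]] ?] //;
   case: g => [[|[|[|?]]] ?] //; case: x => [[|[|[|?]]] ?].
Qed.

Lemma col3' (g : 'I_3) : exists x1 x2 : 'I_3, [/\ x1 != x2, x1 != g & x2 != g].
Proof.
case: g => [[|[|[|?]]] ?] //.
- by exists (inord 1), (inord 2); rewrite -!val_eqE /= !inordK.
- by exists (inord 0), (inord 2); rewrite -!val_eqE /= !inordK.
- by exists (inord 0), (inord 1); rewrite -!val_eqE /= !inordK.
Qed.

Lemma col3all (x1 x2 g y : 'I_3) :
  x1 != x2 -> x1 != g -> x2 != g -> [|| y == g, y == x1 | y == x2].
Proof.
by case: x1 => [[|[|[|?]]] ?] //; case: x2 => [[|[|[|?]]] ?] //;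
   case: g => [[|[|[|?]]] ?] //; case: y => [[|[|[|?]]] ?].
Qed.

Lemma disjP (T : finType) (A B : {set T}) :
  (forall x, x \in A -> x \in B -> False) -> [disjoint A & B].
Proof.
move=> H; rewrite -setI_eq0; apply/eqP/setP => x; rewrite in_setI in_set0.
by apply/negP => /andP[h1 h2]; exact: H h1 h2.
Qed.

Ltac llia := try (unfold reverse_coercion in * );
  try (change (Finite.sort (fintype_ordinal__canonical__fintype_Finite ?k)) with (ordinal k) in * ); lia.

Section Comp.
Variables (N : nat) (c : 'I_N -> 'I_N -> 'I_3).
Hypothesis csym : forall x y, c x y = c y x.
Hypothesis noRB : ~ has_rainbow_K3 c.
Implicit Types (S : {set 'I_N}) (g : 'I_3) (u v z q a b : 'I_N).

Lemma gal x y z : x != y -> y != z -> x != z ->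
  [|| c x y == c y z, c x y == c x z | c y z == c x z].
Proof.
move=> xy yz xz.
have [h1|h1] := eqVneq (c x y) (c y z); first by apply/or3P; constructor 1; apply/eqP.
have [h2|h2] := eqVneq (c x y) (c x z); first by apply/or3P; constructor 2; apply/eqP.
have [h3|h3] := eqVneq (c y z) (c x z); first by apply/or3P; constructor 3; apply/eqP.
by exfalso; apply: noRB; exists x, y, z; split.
Qed.

Definition ge (S : {set 'I_N}) (g : 'I_3) :=
  [rel a b | [&& a \in S, b \in S, a != b & c a b == g]].
Definition cp S g u := [set z | connect (ge S g) u z].

Lemma ge_sym S g : connect_sym (ge S g).
Proof.
apply: sym_connect_sym => a b /=.
by rewrite csym eq_sym; do 2!case: (_ \in S).
Qed.

Lemma cp_refl S g u : u \in cp S g u.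
Proof. by rewrite inE. Qed.

Lemma cp_sym S g u z : z \in cp S g u -> u \in cp S g z.
Proof. by rewrite !inE ge_sym. Qed.

Lemma cp_trans S g u v z : v \in cp S g u -> z \in cp S g v -> z \in cp S g u.
Proof. rewrite !inE; exact: connect_trans. Qed.

Lemma cp_eq S g u z : z \in cp S g u -> cp S g z = cp S g u.
Proof.
move=> h; apply/setP => w; apply/idP/idP => hw.
  exact: cp_trans h hw.
exact: cp_trans (cp_sym h) hw.
Qed.

Lemma cp_disj S g u v z : v \notin cp S g u -> z \in cp S g v -> z \notin cp S g u.
Proof.
move=> nv zv; apply/negP => zu; case/negP: nv.
exact: cp_trans zu (cp_sym zv).
Qed.

Lemma cp_sub S g u : u \in S -> {subset cp S g u <= S}.
Proof.
move=> uS z; rewrite inE => /(closed_connect _ ) h.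
have cl : closed (ge S g) S.
  apply: (intro_closed (ge_sym S g)) => a b /=.
  by case/and4P.
by rewrite -(h _ cl).
Qed.

Lemma cp_nb S g a b : a \in S -> b \in S -> a != b -> c a b = g -> b \in cp S g a.
Proof. by move=> aS bS ab cab; rewrite inE connect1 //= aS bS ab cab eqxx. Qed.

Lemma cp_cross S g a b : a \in S -> b \in S -> b \notin cp S g a ->
  (a != b) && (c a b != g).
Proof.
move=> aS bS nb.
have ab : a != b by apply: contraNneq nb => <-; exact: cp_refl.
by rewrite ab /=; apply: contraNneq nb => h; exact: cp_nb.
Qed.

Lemma cp_unif S g u z q : u \in S -> z \in S -> z \notin cp S g u ->
  q \in cp S g u -> c z q = c z u.
Proof.
move=> uS zS nz; rewrite inE => hq.
pose A := [set w | (w \in cp S g u) ==> (c z w == c z u)].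
have cl : closed (ge S g) A.
  have memA w : (w \in A) = ((w \in cp S g u) ==> (c z w == c z u)) by exact: in_set.
  apply: (intro_closed (ge_sym S g)) => a b /= /and4P[aS bS ab /eqP cab].
  rewrite !memA => ha; apply/implyP => hb.
  have au : a \in cp S g u.
    by apply: (cp_trans hb); apply: cp_nb => //; [rewrite eq_sym | rewrite csym].
  move/implyP: ha => /(_ au) /eqP <-.
  have nza : z \notin cp S g a by rewrite (cp_eq au).
  have nzb : z \notin cp S g b by rewrite (cp_eq hb).
  have /andP[za cza] := cp_cross aS zS nza.
  have /andP[zb czb] := cp_cross bS zS nzb.
  rewrite eq_sym in za; rewrite eq_sym in zb; rewrite csym in cza; rewrite csym in czb.
  case/or3P: (gal za ab zb) => /eqP h.
  - by rewrite h cab eqxx in cza.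
  - by rewrite h.
  - by rewrite -h cab eqxx in czb.
have := closed_connect cl hq.
have memA w : (w \in A) = ((w \in cp S g u) ==> (c z w == c z u)) by exact: in_set.
rewrite !memA cp_refl eqxx /= => /esym/implyP h; apply/eqP; apply: h.
by rewrite inE.
Qed.

End Comp.

Lemma col_ne (col : 'I_3) : exists g : 'I_3, g != col.
Proof.
have [x1 [x2 [h1 h2 h3]]] := col3' col; by exists x1.
Qed.

Section Gallai.
Variables (N : nat) (c : 'I_N -> 'I_N -> 'I_3).
Hypothesis csym : forall x y, c x y = c y x.
Hypothesis noRB : ~ has_rainbow_K3 c.
Implicit Types (S : {set 'I_N}) (g : 'I_3) (u v z q a b : 'I_N).

Notation ge := (ge c).
Notation cp := (cp c).

Lemma gallai_set k : forall S, #|S| = k.+2 ->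
  exists g, exists a b, [/\ a \in S, b \in S & ~~ connect (ge S g) a b].
Proof.
elim: k => [|k IH] S hS.
  have /cards2P [x [y [xy defS]]] : #|S| == 2 by rewrite hS.
  have [g hg] := col_ne (c x y).
  exists g, x, y; rewrite defS !inE !eqxx orbT; split => //.
  apply/negP => /(closed_connect _) h.
  have cl : closed (ge [set x; y] g) [set x].
    apply: (intro_closed (ge_sym csym _ g)) => a b /= /and4P[aS bS ab /eqP cab].
    rewrite !inE => /eqP ax; subst a.
    move: bS; rewrite !inE => /orP[/eqP bx|/eqP ey]; first by rewrite bx eqxx in ab.
    by rewrite -ey cab eqxx in hg.
  by have := h _ cl; rewrite !inE eqxx eq_sym (negbTE xy).
have : 0 < #|S| by rewrite hS.
case/card_gt0P => x xS.
set S' := S :\ x.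
have hS' : #|S'| = k.+2 by move: hS; rewrite (cardsD1 x S) xS add1n => -[].
have S'S : S' \subset S by apply: subsetDl.
have inS' y : (y \in S') = (y != x) && (y \in S) by rewrite !inE.
have [g [a0 [b0 [a0S b0S nab]]]] := IH S' hS'.
have xnS' : x \notin S' by rewrite inS' eqxx.
case: (boolP [exists y in S', [forall z in cp S' g y, c x z != g]]).
  case/exists_inP => y yS' /forall_inP hy.
  exists g, y, x; split => //; first exact: (subsetP S'S).
  apply/negP => /(closed_connect _) h.
  have cl : closed (ge S g) (cp S' g y).
    apply: (intro_closed (ge_sym csym _ g)) => a b /= /and4P[aS bS ab /eqP cab] ha.
    have aS' : a \in S' := cp_sub csym yS' ha.
    have [bx|bx] := eqVneq b x.
      by move: (hy a ha); rewrite -bx csym cab eqxx.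
    apply: (cp_trans ha); apply: cp_nb => //; by rewrite inS' bx.
  have := h _ cl; rewrite cp_refl => /esym hx.
  by move: (cp_sub csym yS' hx); rewrite (negbTE xnS').
rewrite negb_exists_in => /forall_inP hB.
have hB' y : y \in S' -> exists2 z, z \in cp S' g y & c x z = g.
  move=> yS'; have := hB y yS'; rewrite negb_forall_in => /exists_inP[z hz].
  by rewrite negbK => /eqP; exists z.
have helperT y a' : y \in S' -> a' \in S' -> a' \notin cp S' g y ->
    c x a' = g -> c x y != g -> c y a' = c x y.
  move=> yS' aS' na cxa cxy.
  have xy : x != y by apply: contraNneq xnS' => ->.
  have /andP[ya cya] := cp_cross yS' aS' na.
  have xa : x != a' by apply: contraNneq xnS' => ->.
  case/or3P: (gal noRB xy ya xa) => /eqP h //.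
    by rewrite h cxa eqxx in cxy.
  by rewrite h cxa eqxx in cya.
have [x1 [x2 [x12 x1g x2g]]] := col3' g.
have key : ~ ((exists2 y, y \in S' & c x y = x1) /\ (exists2 y, y \in S' & c x y = x2)).
  case=> [[y yS cy] [y' yS' cy']].
  have gy : c x y != g by rewrite cy.
  have gy' : c x y' != g by rewrite cy'.
  have x12' : x1 <> x2 by apply/eqP.
  have [yy|yy] := boolP (y' \in cp S' g y).
    have [y'' [y''S ny'']] : exists y'', y'' \in S' /\ y'' \notin cp S' g y.
      case: (boolP (a0 \in cp S' g y)) => ha0; last by exists a0.
      case: (boolP (b0 \in cp S' g y)) => hb0; last by exists b0.
      case/negP: nab; rewrite -inE.
      exact: cp_trans (cp_sym csym ha0) hb0.
    have [a'' ha'' cxa''] := hB' y'' y''S.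
    have na1 : a'' \notin cp S' g y := cp_disj csym ny'' ha''.
    have na2 : a'' \notin cp S' g y' by rewrite (cp_eq csym yy).
    have a''S : a'' \in S' := cp_sub csym y''S ha''.
    have e1 := helperT y a'' yS a''S na1 cxa'' gy.
    have e2 := helperT y' a'' yS' a''S na2 cxa'' gy'.
    have e3 := cp_unif csym noRB yS a''S na1 yy.
    by apply: x12'; rewrite -cy -cy' -e1 -e2 csym -e3 csym.
  have [a' ha' cxa'] := hB' y' yS'.
  have [a ha cxa] := hB' y yS.
  have na' : a' \notin cp S' g y := cp_disj csym yy ha'.
  have ny : y \notin cp S' g y'.
    by apply: contra yy => h; exact: (cp_sym csym h).
  have na : a \notin cp S' g y' := cp_disj csym ny ha.
  have a'S : a' \in S' := cp_sub csym yS' ha'.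
  have aS : a \in S' := cp_sub csym yS ha.
  have e1 := helperT y a' yS a'S na' cxa' gy.
  have e2 := helperT y' a yS' aS na cxa gy'.
  have e3 := cp_unif csym noRB yS' yS ny ha'.
  have e4 := cp_unif csym noRB yS yS' yy ha.
  by apply: x12'; rewrite -cy -cy' -e1 -e2 e3 e4 csym.
have [be [hbe nbe]] : exists be, be != g /\ forall y, y \in S' -> c x y != be.
  case: (classic (forall y, y \in S' -> c x y != x1)) => h1.
    by exists x1.
  case: (classic (forall y, y \in S' -> c x y != x2)) => h2.
    by exists x2.
  exfalso; apply: key; split.
    by apply: NNPP => hh; apply: h1 => y yS; apply/eqP => e; apply: hh; exists y.
  by apply: NNPP => hh; apply: h2 => y yS; apply/eqP => e; apply: hh; exists y.
exists be, x, a0; split => //; first exact: (subsetP S'S).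
apply/negP => /(closed_connect _) h.
have cl : closed (ge S be) [set x].
  apply: (intro_closed (ge_sym csym _ be)) => a b /= /and4P[aS bS ab /eqP cab].
  rewrite inE => /eqP ax; subst a.
  by move: (nbe b); rewrite inS' eq_sym ab bS cab eqxx => /(_ isT).
have := h _ cl; rewrite !inE eqxx => /esym/eqP ax.
by move: a0S; rewrite ax (negbTE xnS').
Qed.

End Gallai.

Section Upper.
Variables (n m N : nat) (c : 'I_N -> 'I_N -> 'I_3).
Hypothesis csym : forall x y, c x y = c y x.
Hypothesis noRB : ~ has_rainbow_K3 c.
Hypothesis noS : ~ has_mono_double_star n m c.
Implicit Types (S : {set 'I_N}) (g col : 'I_3) (u v z q a b : 'I_N).

Definition nb col u := [set z | (z != u) && (c u z == col)].
Definition deg col u := #|nb col u|.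
Definition comp g u := cp c [set: 'I_N] g u.
Definition ext g col u := [set z | (z \notin comp g u) && (c u z == col)].

Lemma in_nb col u z : (z \in nb col u) = (z != u) && (c u z == col).
Proof. exact: in_set. Qed.
Lemma in_ext g col u z : (z \in ext g col u) = (z \notin comp g u) && (c u z == col).
Proof. exact: in_set. Qed.

Lemma comp_refl g u : u \in comp g u.
Proof. exact: cp_refl. Qed.
Lemma comp_sym g u z : z \in comp g u -> u \in comp g z.
Proof. exact: (cp_sym csym). Qed.
Lemma comp_trans g u v z : v \in comp g u -> z \in comp g v -> z \in comp g u.
Proof. exact: cp_trans. Qed.
Lemma comp_eq g u z : z \in comp g u -> comp g z = comp g u.
Proof. exact: (cp_eq csym). Qed.
Lemma comp_disj g u v z : v \notin comp g u -> z \in comp g v -> z \notin comp g u.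
Proof. exact: (cp_disj csym). Qed.
Lemma comp_nb g a b : a != b -> c a b = g -> b \in comp g a.
Proof. move=> ab cab; rewrite /comp; apply: cp_nb => //; exact: in_setT. Qed.
Lemma comp_cross g a b : b \notin comp g a -> (a != b) && (c a b != g).
Proof. rewrite /comp => h; exact: (cp_cross (in_setT a) (in_setT b) h). Qed.
Lemma comp_unif g u z q : z \notin comp g u -> q \in comp g u -> c z q = c z u.
Proof. rewrite /comp => h1 h2; exact: (cp_unif csym noRB (in_setT u) (in_setT z) h1 h2). Qed.

Lemma ds_core u v col (P Q : {set 'I_N}) :
  u != v -> c u v = col -> P \subset nb col u -> Q \subset nb col v ->
  u \notin Q -> v \notin P -> m <= #|Q| -> n <= #|P :\: Q| -> False.
Proof.
move=> uv cuv sP sQ uQ vP hQ hP.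
have [B sB cB] := subset_of_card hQ.
have [A sA cA] := subset_of_card hP.
apply: noS; exists col, u, v, A, B; split.
- by split.
- split.
  + rewrite -setI_eq0; apply/eqP/setP => z; rewrite !inE.
    apply/negP => /andP[/(subsetP sA)]; rewrite inE => /andP[zQ _] /(subsetP sB) zQ'.
    by rewrite zQ' in zQ.
  + rewrite inE negb_or; apply/andP; split.
      apply/negP => /(subsetP sA); rewrite inE => /andP[_] /(subsetP sP).
      by rewrite in_nb eqxx.
    by apply: contra uQ => /(subsetP sB).
  + rewrite inE negb_or; apply/andP; split.
      by apply/negP => /(subsetP sA); rewrite inE => /andP[_]; apply/negP.
    by apply/negP => /(subsetP sB) /(subsetP sQ); rewrite in_nb eqxx.
- split => // [a /(subsetP sA)|b /(subsetP sB) /(subsetP sQ)].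
    by rewrite inE => /andP[_] /(subsetP sP); rewrite in_nb => /andP[_ /eqP].
  by rewrite in_nb => /andP[_ /eqP].
Qed.

Lemma VR u v col : u != v -> c u v = col -> n + m + 1 <= deg col u ->
  m + 1 <= deg col v -> False.
Proof.
move=> uv cuv du dv.
have vu : v != u by rewrite eq_sym.
have unb : u \in nb col v by rewrite in_nb uv csym cuv eqxx.
have vnb : v \in nb col u by rewrite in_nb vu cuv eqxx.
have hQ0 : m <= #|nb col v :\ u|.
  move: dv; rewrite /deg (cardsD1 u (nb col v)) unb; lia.
have [B sB cB] := subset_of_card hQ0.
apply: (@ds_core u v col (nb col u :\ v) B uv cuv).
- exact: subsetDl.
- exact: subset_trans sB (subsetDl _ _).
- by apply/negP => /(subsetP sB); rewrite !inE eqxx.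
- by rewrite !inE eqxx.
- by rewrite cB.
- have := cardsD_ge (nb col u :\ v) B.
  move: du; rewrite /deg (cardsD1 v (nb col u)) vnb cB /= /reverse_coercion; lia.
Qed.

Lemma card3 (A B C D : {set 'I_N}) :
  [disjoint A & B] -> [disjoint A :|: B & C] -> A :|: B :|: C = D ->
  #|A| + #|B| + #|C| = #|D|.
Proof. by move=> d1 d2 <-; rewrite !cardsU_disj. Qed.

Lemma deg_sum u x1 x2 g : x1 != x2 -> x1 != g -> x2 != g ->
  deg x1 u + deg x2 u + deg g u = N.-1.
Proof.
move=> h12 h1 h2.
have -> : N.-1 = #|[set~ u]| by rewrite cardsC1 card_ord.
rewrite /deg; apply: card3.
- apply: disjP => z; rewrite !in_nb => /andP[_ /eqP ->] /andP[_].
  by rewrite (negbTE h12).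
- apply: disjP => z; rewrite in_setU !in_nb.
  case/orP => /andP[_ /eqP ->] /andP[_]; by rewrite ?(negbTE h1) ?(negbTE h2).
- apply/setP => z; rewrite !in_setU !in_nb !inE.
  case: (z != u) => //=.
  by have := col3all (c u z) h12 h1 h2; case/or3P => ->; rewrite ?orbT.
Qed.

Lemma ext_sum g x1 x2 u : x1 != x2 -> x1 != g -> x2 != g ->
  #|ext g x1 u| + #|ext g x2 u| + #|comp g u| = N.
Proof.
move=> h12 h1 h2.
apply: (@eq_trans _ _ #|[set: 'I_N]|); last by rewrite cardsT card_ord.
apply: card3.
- apply: disjP => z; rewrite !in_ext => /andP[_ /eqP ->] /andP[_].
  by rewrite (negbTE h12).
- apply: disjP => z; rewrite in_setU !in_ext.
  by case/orP => /andP[/negbTE -> _].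
- apply/setP => z; rewrite !in_setU !in_ext in_setT.
  case: (boolP (z \in comp g u)) => hz; rewrite ?orbT //=.
  have /andP[_ hg] := comp_cross hz.
  have := col3all (c u z) h12 h1 h2; rewrite (negbTE hg) /=.
  by case/orP => ->; rewrite ?orbT.
Qed.

Lemma ext_nb g col u : ext g col u \subset nb col u.
Proof.
apply/subsetP => z; rewrite in_ext in_nb => /andP[hz ->]; rewrite andbT.
by apply: contraNneq hz => ->; exact: comp_refl.
Qed.

Lemma nb_comp g u : nb g u \subset comp g u :\ u.
Proof.
apply/subsetP => z; rewrite in_nb in_setD1 => /andP[zu /eqP cz]; rewrite zu /=.
by apply: comp_nb => //; rewrite eq_sym.
Qed.

Lemma deg_comp g u : deg g u < #|comp g u|.
Proof.
have := subset_leq_card (nb_comp g u).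
by rewrite /deg (cardsD1 u (comp g u)) comp_refl.
Qed.

Lemma ext_unif g col u u' : u' \in comp g u -> ext g col u' = ext g col u.
Proof.
move=> h; apply/setP => z; rewrite !in_ext (comp_eq h).
case: (boolP (z \in comp g u)) => //= hz.
by rewrite csym (comp_unif hz h) csym.
Qed.

Lemma M1 g u col : m + 1 <= #|comp g u| -> n + 1 <= #|ext g col u| -> False.
Proof.
move=> hc he.
have : 0 < #|ext g col u| by lia.
case/card_gt0P => v hv.
move: (hv); rewrite in_ext => /andP[vu /eqP cuv].
have uv : u != v by apply: contraNneq vu => <-; exact: comp_refl.
apply: (@ds_core u v col (ext g col u :\ v) (comp g u :\ u) uv cuv).
- exact: subset_trans (subsetDl _ _) (ext_nb g col u).
- apply/subsetP => q; rewrite in_setD1 in_nb => /andP[qu qc].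
  rewrite (comp_unif vu qc) csym cuv eqxx andbT.
  by apply: contraNneq vu => <-.
- by rewrite in_setD1 eqxx.
- by rewrite in_setD1 eqxx.
- by move: hc; rewrite (cardsD1 u (comp g u)) comp_refl /=; llia.
- have sub : ext g col u :\ v \subset (ext g col u :\ v) :\: (comp g u :\ u).
    apply/subsetP => z hz; rewrite in_setD hz andbT in_setD1.
    move: hz; rewrite in_setD1 in_ext => /andP[_ /andP[zc _]].
    by rewrite (negbTE zc) andbF.
  have := subset_leq_card sub.
  by move: he; rewrite (cardsD1 v (ext g col u)) hv /=; llia.
Qed.


Hypothesis hm : 1 <= m.
Hypothesis hn : 6 * m + 7 <= n.
Hypothesis hN : 5 * n <= (2 * N).+1.

Lemma step2 g x x' y : x != x' -> x != g -> x' != g ->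
  n + m + 1 <= #|ext g x y| -> False.
Proof.
move=> hxx' hx hx' hW.
have W1 : forall z, z \in (ext g x y) -> deg x z <= m.
  move=> z hz; rewrite leqNgt; apply/negP => hd.
  move: (hz); rewrite in_ext => /andP[zy /eqP cyz].
  have yz : y != z by apply: contraNneq zy => <-; exact: comp_refl.
  apply: (VR yz cyz); last by rewrite addn1.
  exact: leq_trans hW (subset_leq_card (ext_nb g x y)).
have W2 : forall z w, z \in (ext g x y) -> w \in comp g z -> w \in (ext g x y).
  move=> z w hz hw; move: (hz); rewrite !in_ext => /andP[zy /eqP cyz].
  have wy : w \notin comp g y := comp_disj zy hw.
  have nyz : y \notin comp g z by apply: contra zy; exact: comp_sym.
  by rewrite wy /= (comp_unif nyz hw) cyz.
have W3 : forall z, z \in (ext g x y) -> m + 1 <= deg x' z.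
  move=> z hz; rewrite leqNgt; apply/negP => hd.
  have dx := W1 z hz.
  have ds := deg_sum z hxx' hx hx'.
  have dg : n + m + 1 <= deg g z by llia.
  set G := nb g z.
  have GW : forall w, w \in G -> w \in (ext g x y).
    move=> w /(subsetP (nb_comp g z)); rewrite in_setD1 => /andP[_ hw].
    exact: W2 hz hw.
  have Gsmall : forall w, w \in G -> deg g w <= m.
    move=> w hw; rewrite leqNgt; apply/negP => hd'.
    move: (hw); rewrite in_nb => /andP[wz /eqP czw].
    by apply: (VR _ czw dg); [rewrite eq_sym | rewrite addn1].
  have Gx' : forall w, w \in G -> n + m + 1 <= deg x' w.
    move=> w hw; have := deg_sum w hxx' hx hx'.
    have := W1 w (GW w hw); have := Gsmall w hw; llia.
  have : 0 < #|G| by rewrite /G -/(deg g z); llia.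
  case/card_gt0P => w0 hw0.
  have sub : G :\ w0 \subset nb x w0 :|: nb g w0.
    apply/subsetP => w; rewrite in_setD1 => /andP[ww0 hw].
    rewrite in_setU !in_nb ww0 /=.
    have := col3all (c w0 w) hxx' hx hx'; case/or3P => /eqP e; rewrite e ?eqxx ?orbT //.
    exfalso; apply: (VR _ e (Gx' w0 hw0)); first by rewrite eq_sym.
    by have := Gx' w hw; llia.
  have h1 := subset_leq_card sub.
  have h2 : #|nb x w0 :|: nb g w0| <= #|nb x w0| + #|nb g w0| by rewrite cardsU leq_subr.
  have h3 := cardsD1 w0 G; rewrite hw0 /= in h3.
  have h4 := W1 w0 (GW w0 hw0); have h5 := Gsmall w0 hw0.
  have h6 : #|G :\ w0| <= m + m := leq_trans h1 (leq_trans h2 (leq_add h4 h5)).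
  rewrite /deg -/G in dg. llia.
have : 0 < #|(ext g x y)| by llia.
case/card_gt0P => z hz.
move: (hz); rewrite in_ext => /andP[zy /eqP cyz].
have es := ext_sum z hxx' hx hx'.
have exz : #|ext g x z| <= m.
  exact: leq_trans (subset_leq_card (ext_nb g x z)) (W1 z hz).
case: (leqP #|comp g z| m) => hcz.
  have sub : ext g x' z \subset ~: ((ext g x y) :|: comp g y).
    apply/subsetP => o ho; rewrite in_setC in_setU negb_or.
    move: (ho); rewrite in_ext => /andP[oz /eqP czo].
    have zo : z != o by apply: contraNneq oz => <-; exact: comp_refl.
    apply/andP; split.
      apply/negP => oW.
      apply: (VR zo czo _ (W3 o oW)).
      have := subset_leq_card (ext_nb g x' z); rewrite -/(deg x' z); llia.
    apply/negP => oy.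
    have := comp_unif zy oy; rewrite czo csym cyz => e.
    by rewrite e eqxx in hxx'.
  have := subset_leq_card sub.
  have cC := cardsC ((ext g x y) :|: comp g y).
  have dWy : [disjoint (ext g x y) & comp g y].
    by apply: disjP => w; rewrite in_ext => /andP[/negbTE ->].
  rewrite (cardsU_disj dWy) in cC.
  have := cardsD1 y (comp g y); rewrite comp_refl /=.
  rewrite card_ord in cC.
  llia.
have ex'z : #|ext g x' z| <= n.
  rewrite leqNgt; apply/negP => h; apply: (M1 (u:=z) (col:=x') (g:=g)); llia.
case: (set0Pn (ext g x' z)) => [[o ho]|h0].
  move: (ho); rewrite in_ext => /andP[oz /eqP czo].
  have sub : comp g z \subset nb x' o.
    apply/subsetP => q hq; rewrite in_nb (comp_unif oz hq) csym czo eqxx andbT.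
    by apply: contraNneq oz => <-.
  have zo : z != o by apply: contraNneq oz => <-; exact: comp_refl.
  apply: (@VR o z x' _ _ _ (W3 z hz)); [by rewrite eq_sym | by rewrite csym czo |].
  have := subset_leq_card sub; rewrite -/(deg x' o); llia.
have e0 : ext g x' z = set0.
  by apply/setP => q; rewrite in_set0; apply/negP => hq; apply: h0; exists q.
have claim : forall w, w \in comp g z -> n + m + 1 <= deg g w.
  move=> w hw.
  have wW : w \in (ext g x y) := W2 z w hz hw.
  have nbw : nb x' w \subset comp g z.
    apply/subsetP => o; rewrite in_nb => /andP[ow cwo].
    apply: contraT => oz.
    have : o \in ext g x' w by rewrite in_ext (comp_eq hw) oz cwo.
    by rewrite (ext_unif _ hw) e0 in_set0.
  have dx' : deg x' w <= n + m.
    rewrite leqNgt; apply/negP => hd.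
    have : 0 < deg x' w by llia.
    case/card_gt0P => o ho.
    move: (ho); rewrite in_nb => /andP[ow /eqP cwo].
    have oW : o \in (ext g x y) := W2 z o hz (subsetP nbw o ho).
    apply: (VR _ cwo _ (W3 o oW)); [by rewrite eq_sym | lia].
  have := deg_sum w hxx' hx hx'; have := W1 w wW; llia.
have : 0 < deg g z by have := claim z (comp_refl g z); llia.
case/card_gt0P => w hw.
move: (hw); rewrite in_nb => /andP[wz /eqP czw].
have wc : w \in comp g z by apply: comp_nb => //; rewrite eq_sym.
apply: (VR _ czw (claim z (comp_refl g z))); first by rewrite eq_sym.
by have := claim w wc; llia.
Qed.


Lemma pairL g u v : v \notin comp g u -> (forall w, m + 1 <= #|comp g w|) ->
  n + 1 <= #|comp g u| + #|comp g v| -> 2 * n < N -> False.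
Proof.
move=> hv big hs hN2.
have /andP[uv hx] := comp_cross hv.
have hu : u \notin comp g v by apply: contra hv; exact: comp_sym.
set x := c u v.
have claim1 : forall z, z \notin comp g u -> z \notin comp g v -> c z u != c z v.
  move=> z zu zv; apply/negP => /eqP e.
  have zu' : z != u by apply: contraNneq zu => ->; exact: comp_refl.
  have uz : u \notin comp g z by apply: contra zu; exact: comp_sym.
  apply: (@ds_core z u (c z u) ((comp g u :|: comp g v) :\ u) (comp g z :\ z) zu' erefl).
  - apply/subsetP => p; rewrite in_setD1 in_setU in_nb => /andP[pu /orP[hp|hp]].
      rewrite (comp_unif zu hp) eqxx andbT.
      by apply: contraNneq zu => <-.
    rewrite (comp_unif zv hp) e eqxx andbT.
    by apply: contraNneq zv => <-.
  - apply/subsetP => q; rewrite in_setD1 in_nb => /andP[qz hq].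
    rewrite (comp_unif uz hq) csym eqxx andbT.
    by apply: contraNneq uz => <-.
  - by rewrite in_setD1 eqxx.
  - by rewrite in_setD1 eqxx.
  - have := big z; rewrite (cardsD1 z (comp g z)) comp_refl /=; llia.
  - have sub : (comp g u :|: comp g v) :\ u \subset
        ((comp g u :|: comp g v) :\ u) :\: (comp g z :\ z).
      apply/subsetP => p hp; rewrite in_setD hp andbT in_setD1 negb_and.
      move: hp; rewrite in_setD1 in_setU => /andP[_ /orP[hp|hp]]; apply/orP; right.
        apply: contra zu => h; apply: comp_trans hp _; exact: comp_sym.
      apply: contra zv => h; apply: comp_trans hp _; exact: comp_sym.
    have d : [disjoint comp g u & comp g v].
      by apply: disjP => w wu wv; move: (comp_disj hv wv); rewrite wu.
    have := subset_leq_card sub.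
    have := cardsD1 u (comp g u :|: comp g v).
    rewrite in_setU comp_refl /= (cardsU_disj d).
    llia.
have eu : #|ext g x u| <= n.
  by rewrite leqNgt; apply/negP => h; apply: (M1 (big u)); rewrite addn1; exact: h.
have ev : #|ext g x v| <= n.
  by rewrite leqNgt; apply/negP => h; apply: (M1 (big v)); rewrite addn1; exact: h.
have sub : [set: 'I_N] \subset ext g x u :|: ext g x v.
  apply/subsetP => z _; rewrite in_setU !in_ext.
  case: (boolP (z \in comp g u)) => zu /=.
    have zv : z \notin comp g v := comp_disj hu zu.
    by rewrite zv /= (comp_unif hv zu) csym.
  case: (boolP (z \in comp g v)) => zv /=.
    by rewrite (comp_unif hu zv) /x eqxx.
  have /andP[_ h1] := comp_cross zu.
  have /andP[_ h2] := comp_cross zv.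
  rewrite csym in h1; rewrite csym in h2.
  have := col3 (claim1 z zu zv) h1 h2 hx.
  by rewrite !(csym z).
have := subset_leq_card sub.
rewrite cardsT card_ord.
have : #|ext g x u :|: ext g x v| <= #|ext g x u| + #|ext g x v| by rewrite cardsU leq_subr.
llia.
Qed.

Lemma comp_div g l (D : {set 'I_N}) :
  (forall z, z \in D -> comp g z \subset D) ->
  (forall z, z \in D -> #|comp g z| = l) -> l %| #|D|.
Proof.
have [k hk] : exists k, #|D| <= k by exists #|D|.
elim: k D hk => [|k IH] D hk hcl hsz.
  by move: hk; rewrite leqn0 => /eqP ->; rewrite dvdn0.
case: (set0Pn D) => [[z hz]|h0]; last first.
  have -> : D = set0.
    by apply/setP => q; rewrite in_set0; apply/negP => hq; apply: h0; exists q.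
  by rewrite cards0 dvdn0.
set D' := D :\: comp g z.
have hD' : #|D| = #|D'| + l.
  rewrite /D' cardsD (setIidPr (hcl z hz)) (hsz z hz).
  have := subset_leq_card (hcl z hz); rewrite (hsz z hz); llia.
have l0 : 0 < l by rewrite -(hsz z hz); apply/card_gt0P; exists z; exact: comp_refl.
have : l %| #|D'|.
  apply: IH.
  - by llia.
  - move=> w; rewrite in_setD => /andP[wz wD]; apply/subsetP => q hq.
    rewrite in_setD (subsetP (hcl w wD) q hq) andbT.
    exact: comp_disj wz hq.
  - by move=> w; rewrite in_setD => /andP[_ wD]; exact: hsz.
by rewrite hD' dvdn_addl.
Qed.

Lemma step1 g a b : b \notin comp g a -> (forall w, m + 1 <= #|comp g w|) ->
  (2 * N = 5 * n + 2) \/ (2 * N + 1 = 5 * n) -> False.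
Proof.
move=> hab big hpar.
have [x1 [x2 [h12 h1 h2]]] := col3' g.
have lb : forall w, N - 2 * n <= #|comp g w|.
  move=> w; have := ext_sum w h12 h1 h2.
  have e1 : #|ext g x1 w| <= n.
    by rewrite leqNgt; apply/negP => h; apply: (M1 (big w)); rewrite addn1; exact: h.
  have e2 : #|ext g x2 w| <= n.
    by rewrite leqNgt; apply/negP => h; apply: (M1 (big w)); rewrite addn1; exact: h.
  llia.
have hN2 : 2 * n < N by llia.
case: hpar => hpar.
  apply: (pairL hab big _ hN2).
  by have := lb a; have := lb b; llia.
pose u0 := [arg max_(u > a) #|comp g u|].
have maxu : forall v, #|comp g v| <= #|comp g u0|.
  by rewrite /u0; case: arg_maxnP => // u _ H v; apply: H.
case: (boolP [exists v, (v \notin comp g u0) && (n + 1 <= #|comp g u0| + #|comp g v|)]).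
  case/existsP => v /andP[hv hs]; exact: (pairL hv big hs hN2).
rewrite negb_exists => /forallP hall.
have small : forall v, v \notin comp g u0 -> #|comp g u0| + #|comp g v| <= n.
  by move=> v hv; have := hall v; rewrite hv /= -ltnNge addn1 ltnS.
have [v0 hv0] : exists v0, v0 \notin comp g u0.
  case: (boolP (a \in comp g u0)) => ha; last by exists a.
  exists b; apply: contra hab => hb.
  apply: comp_trans (comp_sym ha) hb.
set l := n %/ 2.
have hodd : odd n.
  have e := congr1 odd hpar.
  by rewrite addn1 /= !oddM /= in e.
have hn2 : n = 2 * l + 1.
  have h := odd_double_half n; rewrite hodd -divn2 -/l -mul2n /= in h; llia.
have D1 : forall z, z \in ~: comp g u0 -> comp g z \subset ~: comp g u0.
  move=> z; rewrite in_setC => hz; apply/subsetP => q hq; rewrite in_setC.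
  exact: comp_disj hz hq.
have D2 : forall z, z \in ~: comp g u0 -> #|comp g z| = l.
  move=> z; rewrite in_setC => hz.
  have := small z hz; have := maxu z; have := lb z; llia.
have dv := comp_div D1 D2.
have cC := cardsC (comp g u0); rewrite card_ord in cC.
have a0 := small v0 hv0; have a1 := lb v0; have a2 := lb u0.
have : l %| #|~: comp g u0| - 4 * l.
  by rewrite dvdn_sub ?dvdn_mull.
have hl6 : 6 <= l by llia.
have r1 : 1 <= #|~: comp g u0| - 4 * l by llia.
have r2 : #|~: comp g u0| - 4 * l <= 2 by llia.
move/(dvdn_leq r1) => r3; llia.
Qed.


Lemma upper_main : (2 * N = 5 * n + 2) \/ (2 * N + 1 = 5 * n) -> False.
Proof.
move=> hpar.
have hS : #|[set: 'I_N]| = (N - 2).+2 by rewrite cardsT card_ord; llia.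
have [g [a [b [_ _ hab]]]] := gallai_set csym noRB hS.
have hba : b \notin comp g a by rewrite /comp /cp inE.
have [x1 [x2 [h12 h1 h2]]] := col3' g.
case: (boolP [exists y, #|comp g y| <= m]).
  case/existsP => y hy.
  have es := ext_sum y h12 h1 h2.
  case: (leqP (n + m + 1) #|ext g x1 y|) => e1; first exact: (step2 h12 h1 h2 e1).
  case: (leqP (n + m + 1) #|ext g x2 y|) => e2.
    by apply: (step2 _ h2 h1 e2); rewrite eq_sym.
  llia.
rewrite negb_exists => /forallP hb.
by apply: (step1 hba _ hpar) => w; have := hb w; rewrite -ltnNge addn1.
Qed.

End Upper.

Definition K0 : 'I_3 := @Ordinal 3 0 isT.
Definition K1 : 'I_3 := @Ordinal 3 1 isT.
Definition K2 : 'I_3 := @Ordinal 3 2 isT.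

Definition lcol (a b : nat) : 'I_3 :=
  if a == b then K2
  else if ((a + 5 - b) %% 5 == 1) || ((a + 5 - b) %% 5 == 4) then K0
  else K1.

Lemma lcol_sym a b : a <= 4 -> b <= 4 -> lcol a b = lcol b a.
Proof.
by case: a => [|[|[|[|[|a]]]]] //; case: b => [|[|[|[|[|b]]]]].
Qed.

Lemma lcol_ne2 a b : a <= 4 -> b <= 4 -> a != b -> lcol a b != K2.
Proof.
by case: a => [|[|[|[|[|a]]]]] //; case: b => [|[|[|[|[|b]]]]] //;
  rewrite /lcol /= -val_eqE /=.
Qed.

Lemma three_ne (p q r g : 'I_3) : p != g -> q != g -> r != g ->
  p != q -> p != r -> q != r -> False.
Proof.
by case: p => [[|[|[|?]]] ?] //; case: q => [[|[|[|?]]] ?] //;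
   case: r => [[|[|[|?]]] ?] //; case: g => [[|[|[|?]]] ?].
Qed.

Lemma lcol_two a (col : 'I_3) : a <= 4 -> col != K2 ->
  exists j1 j2, [/\ j1 != j2, j1 <= 4, j2 <= 4 &
    forall b, b <= 4 -> lcol a b = col -> b = j1 \/ b = j2].
Proof.
move=> ha hc.
have [c0|c1] : col = K0 \/ col = K1.
  move: hc; case: col => [[|[|[|?]]] ?] //; rewrite -val_eqE /= // => _.
  - by left; apply/val_inj.
  - by right; apply/val_inj.
- subst col; move: ha.
  case: a => [|[|[|[|[|a]]]]] // _;
  [exists 1, 4 | exists 2, 0 | exists 3, 1 | exists 4, 2 | exists 0, 3];
  split => // b; case: b => [|[|[|[|[|b]]]]] // _ e;
  first [by left | by right | (move/(congr1 val): e => h; vm_compute in h; discriminate h)].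
- subst col; move: ha.
  case: a => [|[|[|[|[|a]]]]] // _;
  [exists 2, 3 | exists 3, 4 | exists 4, 0 | exists 0, 1 | exists 1, 2];
  split => // b; case: b => [|[|[|[|[|b]]]]] // _ e;
  first [by left | by right | (move/(congr1 val): e => h; vm_compute in h; discriminate h)].
Qed.

Lemma card_range (N : nat) (A : {set 'I_N}) lo k :
  (forall z : 'I_N, z \in A -> lo <= z < lo + k) -> #|A| <= k.
Proof.
move=> H; rewrite cardE -(size_map val) -(size_iota lo k).
apply: uniq_leq_size; first by rewrite (map_inj_uniq val_inj) enum_uniq.
move=> x /mapP [z]; rewrite mem_enum => zA ->.
by rewrite mem_iota; exact: H.
Qed.

Section Lower.
Variables (n N : nat).
Hypothesis hn2 : 2 <= n.
Hypothesis hNle : N <= 5 * (n %/ 2) + odd n.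

Definition hh := n %/ 2.
Definition blk (x : 'I_N) := minn (x %/ hh) 4.
Definition lc (x y : 'I_N) := lcol (blk x) (blk y).

Lemma hh_pos : 0 < hh.
Proof. rewrite /hh; lia. Qed.

Lemma n_eq : n = 2 * hh + odd n.
Proof. rewrite /hh; lia. Qed.

Lemma blk_le x : blk x <= 4.
Proof. exact: geq_minr. Qed.

Lemma lc_sym : edge_coloring lc.
Proof. by move=> x y; rewrite /lc lcol_sym ?blk_le. Qed.

Lemma lc_noRB : ~ has_rainbow_K3 lc.
Proof.
case=> x [y [z [xy yz xz [h1 h2 h3]]]].
move: h1 h2 h3; rewrite /lc.
have ba := blk_le x; have bb := blk_le y; have bc := blk_le z.
case: (eqVneq (blk x) (blk y)) => [e|ab].
  by rewrite e => _ _ /negP [].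
case: (eqVneq (blk y) (blk z)) => [e|bc'].
  by rewrite e => _ /negP [].
case: (eqVneq (blk x) (blk z)) => [e|ac].
  by rewrite e (lcol_sym bb bc) => /negP [].
move=> h1 h2 h3.
exact: (three_ne (lcol_ne2 ba bb ab) (lcol_ne2 bb bc bc') (lcol_ne2 ba bc ac) h1 h2 h3).
Qed.

Lemma blk_card j : #|[set z : 'I_N | blk z == j]| <= hh + ((j == 4) && odd n).
Proof.
have h0 := hh_pos.
have hd : hh = n %/ 2 := erefl.
case: (ltngtP j 4) => hj.
- apply: card_range (j * hh) _ _ => z; rewrite inE /blk => /eqP e.
  have ez : z %/ hh = j.
    by move: e; rewrite /minn; case: ltnP => //; lia.
  have := divn_eq z hh; have := ltn_pmod z h0; rewrite ez; lia.
- have -> : [set z : 'I_N | blk z == j] = set0.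
    apply/setP => z; rewrite inE in_set0; apply/negP => /eqP e.
    by have := blk_le z; rewrite e; lia.
  by rewrite cards0.
- subst j; rewrite ?eqxx /=.
  apply: card_range (4 * hh) _ _ => z; rewrite inE /blk => /eqP e.
  have ez : 4 <= z %/ hh.
    by move: e; rewrite /minn; case: ltnP => // h1 h2; lia.
  rewrite leq_divRL // in ez.
  have := ltn_ord z; lia.
Qed.

Lemma lc_deg (u : 'I_N) col :
  #|[set z | (z != u) && (lc u z == col)]| <= n.
Proof.
have h0 := hh_pos; have ne := n_eq.
case: (eqVneq col K2) => [->|hc].
  have sub : [set z | (z != u) && (lc u z == K2)] \subset [set z : 'I_N | blk z == blk u].
    apply/subsetP => z; rewrite !inE => /andP[_ /eqP e].
    apply: contraLR (introT eqP e) => nb.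
    by apply: lcol_ne2; rewrite ?blk_le // eq_sym.
  apply: leq_trans (subset_leq_card sub) _.
  apply: leq_trans (blk_card _) _.
  by case: (_ && _); lia.
have [j1 [j2 [j12 hj1 hj2 H]]] := lcol_two (blk_le u) hc.
have sub : [set z | (z != u) && (lc u z == col)] \subset
    [set z : 'I_N | blk z == j1] :|: [set z : 'I_N | blk z == j2].
  apply/subsetP => z; rewrite !inE => /andP[_ /eqP e].
  by case: (H _ (blk_le z) e) => ->; rewrite eqxx ?orbT.
apply: leq_trans (subset_leq_card sub) _.
rewrite cardsU.
have c1 := blk_card j1; have c2 := blk_card j2.
have : ((j1 == 4) && odd n) + ((j2 == 4) && odd n) <= odd n.
  move: j12; case: (j1 =P 4) => [->|_]; case: (j2 =P 4) => [->|_] //=;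
  by case: (odd n).
lia.
Qed.

Lemma lc_noS m : ~ has_mono_double_star n m lc.
Proof.
case=> col [u [v [A [B [[uv cA cB] [dAB uAB vAB] [cuv hA hB]]]]]].
have sub : v |: A \subset [set z | (z != u) && (lc u z == col)].
  apply/subsetP => z; rewrite !inE => /orP[/eqP ->|zA].
    by rewrite eq_sym uv cuv eqxx.
  rewrite (hA z zA) eqxx andbT.
  by apply: contraNneq uAB => <-; rewrite inE zA.
have := leq_trans (subset_leq_card sub) (lc_deg u col).
have vA : v \notin A by apply: contra vAB; rewrite inE => ->.
rewrite cardsU1 vA cA /=; lia.
Qed.

Lemma lower_main m : ~ gr_property 3 n m N.
Proof.
move=> H; case: (H lc lc_sym); [exact: lc_noRB | exact: (@lc_noS m)].
Qed.

End Lower.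

Unset Implicit Arguments.

Theorem proposition1 (n m : nat) (hm : 1 <= m) (hn : 6 * m + 7 <= n) :
  is_gr_K3_double_star 3 n m
    (if ~~ odd n then 5 * (n %/ 2) + 1 else 5 * ((n - 1) %/ 2) + 2).
Proof.
set G := (if ~~ odd n then _ else _).
have hG : (2 * G = 5 * n + 2) \/ (2 * G + 1 = 5 * n).
  rewrite /G; case: (boolP (odd n)) => ho /=; [right|left]; lia.
have hGN : G <= 5 * (n %/ 2) + odd n + 1.
  rewrite /G; case: (boolP (odd n)) => ho /=; lia.
split.
- move=> c csym.
  case: (classic (has_rainbow_K3 c)) => [h|nR]; first by left.
  case: (classic (has_mono_double_star n m c)) => [h|nS]; first by right.
  exfalso; apply: (upper_main csym nR nS hm hn _ hG); lia.
- move=> N0 hP; rewrite leqNgt; apply/negP => hlt.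
  apply: (@lower_main n N0 _ _ m hP); lia.
Qed.
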